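(* Let $a<b<c$ be integers, so that the infinite arc $(-\infty,b)$ crosses the finite arc $(a,c)$. Then there are non-split short exact sequences in $\mathcal{C}_2$ \[ 0\to(-\infty,b)\xrightarrow{f}(a,b)\oplus(-\infty,c)\xrightarrow{g}(a,c)\to0,\qquad 0\to(a,c)\xrightarrow{f'}(b,c)\oplus(-\infty,a)\xrightarrow{g'}(-\infty,b)\to0. \]
   Context: Let $R=\mathbb{C}[x,y]/(x^2)$, graded with $\deg x=1$, $\deg y=-1$; $M(j)_n=M_{j+n}$. $\mathcal{C}_2$ is the exact category of finitely generated $\mathbb{Z}$-graded maximal Cohen–Macaulay $R$-modules with degree-preserving morphisms. An arc is a pair $(a,b)$ with $a\in\mathbb{Z}\cup\{-\infty\}$, $b\in\mathbb{Z}$, $a<b$; a finite arc $(a,b)$ ($a\in\mathbb{Z}$) denotes the module $(x,y^{b-a-1})(1-b)$ (where $(x,y^0)=R$), and an infinite arc $(-\infty,b)$ denotes $\mathbb{C}[y](-b)=(R/(x))(-b)$. *)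

(* Defs.v *)
From mathcomp Require Import all_boot all_algebra.
From mathcomp Require Import complex.
From mathcomp Require Import Rstruct.
Unset Printing Implicit Defensive.
Import GRing.Theory.
Local Open Scope ring_scope.

Definition CC : fieldType := (Rdefinitions.R)[i].

(* Z-graded modules over  R = K[x,y]/(x^2),  deg x = 1, deg y = -1.          *)
Unset Implicit Arguments.
Record grmod (K : fieldType) := GrMod {
  gcomp :> int -> lmodType K;
  gX : forall n : int, gcomp n -> gcomp (n + 1);
  gY : forall n : int, gcomp (n + 1) -> gcomp n;
  gX_lin : forall n (c : K) u v, gX n (c *: u + v) = c *: gX n u + gX n v;
  gY_lin : forall n (c : K) u v, gY n (c *: u + v) = c *: gY n u + gY n v;
  gXX : forall n (v : gcomp n), gX (n + 1) (gX n v) = 0;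
  gXY : forall n (v : gcomp (n + 1)), gX n (gY n v) = gY (n + 1) (gX (n + 1) v)
}.

Arguments gcomp {K}.
Arguments gX {K} g {n} _.
Arguments gY {K} g {n} _.

Unset Implicit Arguments.
Record grhom (K : fieldType) (M N : grmod K) := GrHom {
  hmap :> forall n : int, M n -> N n;
  hmap_lin : forall n (c : K) u v, hmap n (c *: u + v) = c *: hmap n u + hmap n v;
  hmap_X : forall n (v : M n), hmap (n + 1) (gX M v) = gX N (hmap n v);
  hmap_Y : forall n (v : M (n + 1)), hmap n (gY M v) = gY N (hmap (n + 1) v)
}.

Arguments hmap {K M N} g n _.

Definition short_exact (K : fieldType) (A B C : grmod K)
  (f : grhom K A B) (g : grhom K B C) : Prop :=
  forall n : int,
    injective (f n) /\
    (forall w : C n, exists v : B n, g n v = w) /\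
    (forall v : B n, g n v = 0 <-> exists u : A n, f n u = v).

Definition ses_split (K : fieldType) (A B C : grmod K)
  (f : grhom K A B) (g : grhom K B C) : Prop :=
  exists s : grhom K C B, forall n (w : C n), g n (s n w) = w.

Section DSum.
Variables (K : fieldType) (M N : grmod K).
Definition ds_X n (p : (gcomp M n * gcomp N n)%type) : (gcomp M (n + 1) * gcomp N (n + 1))%type :=
  (gX M p.1, gX N p.2).
Definition ds_Y n (p : (gcomp M (n + 1) * gcomp N (n + 1))%type) : (gcomp M n * gcomp N n)%type :=
  (gY M p.1, gY N p.2).
Lemma ds_X_lin n (c : K) u v : ds_X n (c *: u + v) = c *: ds_X n u + ds_X n v.
Proof. by case: u v => [u1 u2] [v1 v2]; rewrite /ds_X /= !gX_lin. Qed.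
Lemma ds_Y_lin n (c : K) u v : ds_Y n (c *: u + v) = c *: ds_Y n u + ds_Y n v.
Proof. by case: u v => [u1 u2] [v1 v2]; rewrite /ds_Y /= !gY_lin. Qed.
Lemma ds_XX n v : ds_X (n + 1) (ds_X n v) = 0.
Proof. by case: v => [v1 v2]; rewrite /ds_X /= !gXX. Qed.
Lemma ds_XY n v : ds_X n (ds_Y n v) = ds_Y (n + 1) (ds_X (n + 1) v).
Proof. by case: v => [v1 v2]; rewrite /ds_X /ds_Y /= !gXY. Qed.
Definition dsum : grmod K :=
  @GrMod K (fun n => (gcomp M n * gcomp N n)%type) ds_X ds_Y ds_X_lin ds_Y_lin ds_XX ds_XY.
End DSum.

(* Monomial graded modules.  In degree n the module has a basis consisting   *)
(* of at most one "y-monomial" (present iff P0 n) and at most one            *)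
(* "x-monomial" (present iff P1 n); the degree-n piece is                   *)
(*   K^(P0 n) * K^(P1 n)   (row vectors of length 0 or 1).                   *)
(* x sends the y-monomial of degree n to the x-monomial of degree n+1 and     *)
(* kills x-monomials; y sends each monomial of degree n+1 to the monomial of *)
(* the same kind in degree n.  (All-ones matrices of size 0 or 1 encode      *)
(* these identity/zero maps.)                                                *)
Section Monomial.
Variables (K : fieldType) (P0 P1 : int -> bool).
Hypothesis compat : forall n : int,
  P0 (n + 1) -> P1 (n + 1) -> P0 n = P1 (n + 1 + 1).
Definition mn_comp (n : int) : lmodType K := ('rV[K]_(P0 n) * 'rV[K]_(P1 n))%type.
Definition mn_X n (p : mn_comp n) : mn_comp (n + 1) :=
  (0, p.1 *m const_mx 1).
Definition mn_Y n (p : mn_comp (n + 1)) : mn_comp n :=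
  (p.1 *m const_mx 1, p.2 *m const_mx 1).
Lemma mn_X_lin n (c : K) u v : mn_X n (c *: u + v) = c *: mn_X n u + mn_X n v.
Proof.
case: u v => [u1 u2] [v1 v2]; rewrite /mn_X /=.
congr pair => /=; rewrite ?scaler0 ?addr0 //.
by rewrite (mulmxDl (c *: u1)) scalemxAl.
Qed.
Lemma mn_Y_lin n (c : K) u v : mn_Y n (c *: u + v) = c *: mn_Y n u + mn_Y n v.
Proof.
case: u v => [u1 u2] [v1 v2]; rewrite /mn_Y /=.
congr pair => /=.
  by rewrite (mulmxDl (c *: u1)) scalemxAl.
by rewrite (mulmxDl (c *: u2)) scalemxAl.
Qed.
Lemma mn_XX n v : mn_X (n + 1) (mn_X n v) = 0.
Proof. by rewrite /mn_X /= mul0mx. Qed.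
Lemma mn_XY n v : mn_X n (mn_Y n v) = mn_Y (n + 1) (mn_X (n + 1) v).
Proof.
case: v => [v1 v2]; rewrite /mn_X /mn_Y /= mul0mx; congr pair.
rewrite -!mulmxA; congr (_ *m _).
apply/matrixP => i j; rewrite !mxE.
have h0 : P0 (n + 1) by move: (leq_ltn_trans (leq0n _) (ltn_ord i)); rewrite lt0b.
have h1 : P1 (n + 1) by move: (leq_ltn_trans (leq0n _) (ltn_ord j)); rewrite lt0b.
under eq_bigr do rewrite !mxE mulr1.
under [in RHS]eq_bigr do rewrite !mxE mulr1.
by rewrite !sumr_const !card_ord (compat n h0 h1).
Qed.
Definition monomod : grmod K :=
  @GrMod K mn_comp mn_X mn_Y mn_X_lin mn_Y_lin mn_XX mn_XY.
End Monomial.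

(* Finite arc (a,b):  (x, y^(b-a-1))(1-b).  Its degree-n piece is the degree *)
(* (n+1-b) piece of the ideal I = (x, y^k), k = b-a-1 (with (x,y^0) = R).     *)
(* I has K-basis { y^i : i >= k } u { x y^i : i >= 0 };  deg y^i = -i and     *)
(* deg x y^i = 1-i.  Hence in degree n of the twist:                          *)
(*   y-monomial y^(b-1-n) present  iff  b-1-n >= 0 and b-1-n >= k             *)
(*                                 iff  n < b and n <= a;                     *)
(*   x-monomial x y^(b-n) present  iff  b-n >= 0  iff  n <= b.                *)
(* Infinite arc (-oo,b):  C[y](-b) = (R/(x))(-b); degree-n piece spanned by   *)
(* y^(b-n) (present iff n <= b), with x acting by 0 (no x-monomials).        *)
From mathcomp Require Import zify.

Definition fin_P0 (a b : int) (n : int) : bool := (n <= a) && (n < b).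
Definition fin_P1 (b : int) (n : int) : bool := n <= b.

Lemma fin_compat (a b : int) : forall n : int,
  fin_P0 a b (n + 1) -> fin_P1 b (n + 1) -> fin_P0 a b n = fin_P1 b (n + 1 + 1).
Proof.
move=> n; rewrite /fin_P0 /fin_P1 => /andP[h1 h2] _.
have -> : (n <= a) = true by apply/idP; lia.
have -> : (n < b) = true by apply/idP; lia.
rewrite /=; apply/esym; apply/idP; lia.
Qed.

Definition inf_P0 (b : int) (n : int) : bool := n <= b.
Definition inf_P1 (n : int) : bool := false.

Lemma inf_compat (b : int) : forall n : int,
  inf_P0 b (n + 1) -> inf_P1 (n + 1) -> inf_P0 b n = inf_P1 (n + 1 + 1).
Proof. by []. Qed.

Definition arc_fin (K : fieldType) (a b : int) : grmod K :=
  monomod K (fin_P0 a b) (fin_P1 b) (fin_compat a b).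

Definition arc_inf (K : fieldType) (b : int) : grmod K :=
  monomod K (inf_P0 b) inf_P1 (inf_compat b).

(* Main.v *)
Require Import Defs.
From mathcomp Require Import all_boot all_algebra zify.
Local Open Scope ring_scope.
Import GRing.Theory.
From mathcomp Require Import zify.
Section J.
Variable K : fieldType.
Local Notation J := (const_mx (1:K)).

Lemma JJ (m k l : bool) (p : 'rV[K]_m) : (m -> l -> k) ->
  p *m (J : 'M_(m,k)) *m (J : 'M_(k,l)) = p *m J.
Proof.
case: m p; case: k; case: l => p H //; apply/matrixP => i j; rewrite !mxE;
  rewrite ?big_ord0 ?big_ord1 ?mxE ?big_ord0 ?big_ord1 ?mulr1 ?mxE ?mulr1 //; try by case: j.
by have := H isT isT.
Qed.

Lemma Jid (k : bool) (p : 'rV[K]_k) : p *m (J : 'M_(k,k)) = p.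
Proof.
case: k p => p; apply/matrixP => i j; rewrite !mxE ?big_ord1 ?mxE ?mulr1 //; try by case: j.
by rewrite (ord1 i) (ord1 j).
Qed.

Lemma JJid (m k : bool) (p : 'rV[K]_m) : (m -> k) ->
  p *m (J : 'M_(m,k)) *m (J : 'M_(k,m)) = p.
Proof. by move=> H; rewrite JJ ?Jid // => /H. Qed.

Lemma Jinj (m k : bool) (p q : 'rV[K]_m) : (m -> k) ->
  p *m (J : 'M_(m,k)) = q *m J -> p = q.
Proof. by move=> H E; rewrite -(JJid _ _ p H) -(JJid _ _ q H) E. Qed.

Lemma rVf0 (k : bool) (p : 'rV[K]_k) : ~~ k -> p = 0.
Proof. by case: k p => p //= _; apply/matrixP => i []. Qed.

Lemma rVeq (k : bool) (p q : 'rV[K]_k) : ~~ k -> p = q.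
Proof. by move=> H; rewrite (rVf0 _ p H) (rVf0 _ q H). Qed.

Lemma J1n0 (k : bool) : k -> (J : 'rV[K]_k) != 0.
Proof.
case: k => // _; apply/eqP => /matrixP /(_ ord0 ord0); rewrite !mxE => /eqP.
by rewrite oner_eq0.
Qed.
End J.

Ltac triv0 := match goal with |- @eq ?T _ _ => first [ match T with context [nat_of_bool ?k] => apply: (rVeq _ k) end | apply: (rVeq _ false) ] end.
Ltac sc := rewrite /fin_P0 /fin_P1 /inf_P0 /inf_P1 /=; try done; move=> *; lia.

Section P1.
Variables (K : fieldType) (a b c : int).
Hypotheses (hab : a < b) (hbc : b < c).
Local Notation J := (const_mx (1:K)).
Local Notation A := (arc_inf K b).
Local Notation B := (dsum K (arc_fin K a b) (arc_inf K c)).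
Local Notation C := (arc_fin K a c).

Definition f1m (n : int) (v : A n) : B n :=
  ((0, v.1 *m J), (v.1 *m J, 0)).

Lemma f1_lin n (k : K) u v : f1m n (k *: u + v) = k *: f1m n u + f1m n v.
Proof.
case: u v => [u1 u2] [v1 v2]; rewrite /f1m /=.
rewrite !mulmxDl -!scalemxAl. congr (_, _); congr (_, _) => /=; by rewrite ?scaler0 ?addr0.
Qed.
Lemma f1_X n v : f1m (n + 1) (gX A v) = gX B (f1m n v).
Proof.
case: v => [v1 v2]; rewrite /f1m /= /ds_X /= /mn_X /= !mul0mx.
by congr (_, (_, _)); triv0; sc.
Qed.
Lemma f1_Y n v : f1m n (gY A v) = gY B (f1m (n + 1) v).
Proof.
case: v => [v1 v2]; rewrite /f1m /= /ds_Y /= /mn_Y /= !mul0mx.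
by rewrite !JJ; try sc.
Qed.
Definition f1 : grhom K A B := GrHom K A B f1m f1_lin f1_X f1_Y.

Definition g1m (n : int) (v : B n) : C n :=
  (v.1.1 *m J, v.1.2 *m J - v.2.1 *m J).

Lemma g1_lin n (k : K) u v : g1m n (k *: u + v) = k *: g1m n u + g1m n v.
Proof.
case: u v => [[u1 u2] [u3 u4]] [[v1 v2] [v3 v4]]; rewrite /g1m /=.
rewrite !mulmxDl -!scalemxAl; congr (_, _) => /=.
by rewrite scalerBr opprD addrACA.
Qed.
Lemma g1_X n v : g1m (n + 1) (gX B v) = gX C (g1m n v).
Proof.
case: v => [[v1 v2] [v3 v4]]; rewrite /g1m /= /ds_X /= /mn_X /= !mul0mx subr0.
by rewrite !JJ; try sc.
Qed.
Lemma g1_Y n v : g1m n (gY B v) = gY C (g1m (n + 1) v).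
Proof.
case: v => [[v1 v2] [v3 v4]]; rewrite /g1m /= /ds_Y /= /mn_Y /= mulmxBl.
by rewrite !JJ; try sc.
Qed.
Definition g1 : grhom K B C := GrHom K B C g1m g1_lin g1_X g1_Y.

Lemma ses1 : short_exact K A B C f1 g1.
Proof.
move=> n; split; [|split].
- case=> [u1 u2] [v1 v2] /= [] E _.
  congr (_, _); last by triv0.
  by apply: Jinj E; sc.
- case=> w1 w2; exists ((w1 *m J, 0), (- (w2 *m J), 0)) => /=.
  rewrite /g1m /= mul0mx sub0r mulNmx opprK.
  by rewrite !JJid //; sc.
- case=> [[p q] [r z]]; split.
  + rewrite /g1m /= => [[E1 E2]].
    have Hp : p = 0.
      apply: (Jinj K _ (fin_P0 a c n)); last by rewrite E1 mul0mx.
      sc.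
    move/subr0_eq: E2 => E2.
    exists (q *m (J : 'M_(fin_P1 b n, inf_P0 b n)), 0).
    rewrite /f1m /= Hp; congr (_, _, (_, _)); last by triv0.
      by rewrite JJid //; sc.
    rewrite JJ; last by sc.
    apply: (Jinj K _ (fin_P1 c n)); last by rewrite JJ // ; sc.
    sc.
  + case=> [[u1 u2]] /= [<- <- <- <-].
    by rewrite /g1m /= mul0mx !JJ ?subrr //; sc.
Qed.

Lemma nsplit1 : ~ ses_split K A B C f1 g1.
Proof.
case=> s Hs.
pose Q := fun n : int => forall w : 'rV[K]_(fin_P1 c n),
  ((s n ((0, w) : C n)).1.2 : 'rV_(fin_P1 b n)) = 0.
have step : forall n, Q (n + 1) -> Q n.
  move=> n IH w; case: (boolP (n + 1 <= c)) => hn; last by triv0; sc.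
  have -> : ((0, w) : C n) = gY C ((0, w *m (J : 'M_(fin_P1 c n, fin_P1 c (n + 1)))) : C (n + 1)).
    rewrite /= /mn_Y /= mul0mx JJid //; sc.
  rewrite hmap_Y /= /ds_Y /mn_Y /=.
  by rewrite IH mul0mx.
have Qall : forall k : nat, Q (c - k%:Z).
  elim => [|k IHk]; first by move=> w; triv0; sc.
  apply: step; have -> : c - k.+1%:Z + 1 = c - k%:Z by lia.
  exact: IHk.
have Qa1 : Q (a + 1).
  have -> : a + 1 = c - Posz (absz (c - a - 1)%R) by lia.
  exact: Qall.
pose e : C a := (J, 0).
have H1 : (s (a + 1) (gX C e)).1.2 = 0 := Qa1 (e.1 *m J).
move: H1; rewrite hmap_X.
have := Hs a e.
case: (s a e) => [[p q] [r z]] /= [He _] H1.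
have Hp : p = 0.
  apply: (Jinj K _ (fin_P1 b (a + 1))); last by rewrite H1 mul0mx.
  sc.
move: He; rewrite Hp mul0mx => /esym /eqP; apply/negP.
apply: J1n0; sc.
Qed.
End P1.

Lemma hmap0 (K : fieldType) (M N : grmod K) (h : grhom K M N) n : hmap h n 0 = 0.
Proof.
have E := hmap_lin K M N h n 1 0 0.
rewrite scale1r addr0 scale1r in E.
by have := congr1 (fun x => x - hmap h n 0) E; rewrite subrr addrK.
Qed.

Section P2.
Variables (K : fieldType) (a b c : int).
Hypotheses (hab : a < b) (hbc : b < c).
Local Notation J := (const_mx (1:K)).
Local Notation A := (arc_fin K a c).
Local Notation B := (dsum K (arc_fin K b c) (arc_inf K a)).
Local Notation C := (arc_inf K b).

Definition f2m (n : int) (v : A n) : B n :=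
  ((v.1 *m J, v.2 *m J), (v.1 *m J, 0)).

Lemma f2_lin n (k : K) u v : f2m n (k *: u + v) = k *: f2m n u + f2m n v.
Proof.
case: u v => [u1 u2] [v1 v2]; rewrite /f2m /=.
by rewrite !mulmxDl -!scalemxAl; congr (_, _, (_, _)) => /=; rewrite ?scaler0 ?addr0.
Qed.
Lemma f2_X n v : f2m (n + 1) (gX A v) = gX B (f2m n v).
Proof.
case: v => [v1 v2]; rewrite /f2m /= /ds_X /= /mn_X /= !mul0mx.
rewrite !JJ; try sc.
by congr (_, _, (_, _)); triv0; sc.
Qed.
Lemma f2_Y n v : f2m n (gY A v) = gY B (f2m (n + 1) v).
Proof.
case: v => [v1 v2]; rewrite /f2m /= /ds_Y /= /mn_Y /= !mul0mx.
by rewrite !JJ; try sc.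
Qed.
Definition f2 : grhom K A B := GrHom K A B f2m f2_lin f2_X f2_Y.

Definition g2m (n : int) (v : B n) : C n :=
  (v.1.1 *m J - v.2.1 *m J, 0).

Lemma g2_lin n (k : K) u v : g2m n (k *: u + v) = k *: g2m n u + g2m n v.
Proof.
case: u v => [[u1 u2] [u3 u4]] [[v1 v2] [v3 v4]]; rewrite /g2m /=.
rewrite !mulmxDl -!scalemxAl; congr (_, _) => /=.
  by rewrite scalerBr opprD addrACA.
by rewrite scaler0 addr0.
Qed.
Lemma g2_X n v : g2m (n + 1) (gX B v) = gX C (g2m n v).
Proof.
case: v => [[v1 v2] [v3 v4]]; rewrite /g2m /= /ds_X /= /mn_X /= !mul0mx subr0.
by congr (_, _); triv0; sc.
Qed.
Lemma g2_Y n v : g2m n (gY B v) = gY C (g2m (n + 1) v).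
Proof.
case: v => [[v1 v2] [v3 v4]]; rewrite /g2m /= /ds_Y /= /mn_Y /= mulmxBl mul0mx.
by rewrite !JJ; try sc.
Qed.
Definition g2 : grhom K B C := GrHom K B C g2m g2_lin g2_X g2_Y.

Lemma ses2 : short_exact K A B C f2 g2.
Proof.
move=> n; split; [|split].
- case=> [u1 u2] [v1 v2] /= [] E1 E2 _.
  congr (_, _).
    by apply: Jinj E1; sc.
  by apply: Jinj E2; sc.
- case=> w1 w2; exists ((w1 *m J, 0), (0, 0)) => /=.
  rewrite /g2m /= mul0mx subr0.
  congr (_, _); last by triv0.
  by rewrite !JJid //; sc.
- case=> [[p q] [r z]]; split.
  + rewrite /g2m /= => [[E1]].
    move/subr0_eq: E1 => E1.
    exists (r *m (J : 'M_(inf_P0 a n, fin_P0 a c n)), q *m (J : 'M_(fin_P1 c n, fin_P1 c n))).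
    rewrite /f2m /=; congr (_, _, (_, _)); last by triv0.
    * rewrite JJ; last by sc.
      apply: (Jinj K _ (inf_P0 b n)); first by sc.
      rewrite JJ; last by sc.
      by rewrite E1.
    * by rewrite JJid //.
    * by rewrite JJid //; sc.
  + case=> [[u1 u2]] /= [<- <- <- <-].
    by rewrite /g2m /= !JJ ?subrr //; sc.
Qed.

Lemma nsplit2 : ~ ses_split K A B C f2 g2.
Proof.
case=> s Hs.
pose e : C b := (J, 0).
have Hx : gX C e = 0.
  by rewrite /= /mn_X /=; congr (_, _); triv0; sc.
have := hmap_X K C B s b e; rewrite Hx hmap0.
have := Hs b e.
case: (s b e) => [[p q] [r z]] /= [He] H1.
have Hr : r = 0 by apply: rVf0; sc.
have Hp : p = 0.
  apply: (Jinj K _ (fin_P1 c (b + 1))); first by sc.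
  move/(congr1 (fun x => x.1.2)): H1 => /= H1.
  by rewrite mul0mx H1.
move: He; rewrite Hp Hr !mul0mx subr0 => /esym /eqP; apply/negP.
apply: J1n0; sc.
Qed.
End P2.

Theorem lemma4p5 (a b c : int) (hab : a < b) (hbc : b < c) :
  (exists (f : grhom CC (arc_inf CC b) (dsum CC (arc_fin CC a b) (arc_inf CC c)))
          (g : grhom CC (dsum CC (arc_fin CC a b) (arc_inf CC c)) (arc_fin CC a c)),
      short_exact CC _ _ _ f g /\ ~ ses_split CC _ _ _ f g) /\
  (exists (f' : grhom CC (arc_fin CC a c) (dsum CC (arc_fin CC b c) (arc_inf CC a)))
          (g' : grhom CC (dsum CC (arc_fin CC b c) (arc_inf CC a)) (arc_inf CC b)),
      short_exact CC _ _ _ f' g' /\ ~ ses_split CC _ _ _ f' g').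
Proof.
split.
- exists (f1 CC a b c hab hbc), (g1 CC a b c hab hbc); split.
    exact: (ses1 CC a b c hab hbc).
  exact: (nsplit1 CC a b c hab hbc).
- exists (f2 CC a b c hab hbc), (g2 CC a b c hab hbc); split.
    exact: (ses2 CC a b c hab hbc).
  exact: (nsplit2 CC a b c hab hbc).
Qed.
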